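(* Let $(\mu,s)$ be a configuration under no observability for the objective game $G$ such that for every $i\in N$, every type $\theta_i\in\operatorname{supp}\mu_i$ is of the form $\theta_i=\alpha\pi_i+\beta$ for some real $\alpha>0$, $\beta$ (possibly depending on $\theta_i$). Suppose that for every nonempty $J\subseteq N$, every mutant sub-profile $\tilde\theta_J\in\prod_{j\in J}(\Theta\setminus\operatorname{supp}\mu_j)$ and every $\eta>0$, the nearby set $B_0^\eta(\tilde\mu^\varepsilon;s)$ is nonempty for all $\varepsilon\in(0,1)^{|J|}$ with $\|\varepsilon\|$ sufficiently small. Then $(\mu,s)$ is stable.
   Context: Objective game: $G=(N,A,\pi)$ is a finite $n$-player normal-form game, $N=\{1,\dots,n\}$, finite action sets $A_i$, $A=\prod_iA_i$, fitness functions $\pi_i:A\to\mathbb{R}$ extended multilinearly to $\prod_i\Delta(A_i)$. Preference types: $\Theta=\mathbb{R}^A$ (extended multilinearly). $\mathcal{M}(\Theta^n)$: product distributions $\mu=\mu_1\times\dots\times\mu_n$ on $\Theta^n$ with finitely supported marginals; $\operatorname{supp}\mu=\prod_i\operatorname{supp}\mu_i$, $\mu_{-i}(\theta_{-i})=\prod_{j\neq i}\mu_j(\theta_j)$. Mutants: for nonempty $J\subseteq N$, a mutant sub-profile is $\tilde\theta_J\in\prod_{j\in J}(\Theta\setminus\operatorname{supp}\mu_j)$ with shares $\varepsilon\in(0,1)^{|J|}$, $\|\varepsilon\|=\max_j\varepsilon_j$; post-entry $\tilde\mu^\varepsilon_i=(1-\varepsilon_i)\mu_i+\varepsilon_i\delta_{\tilde\theta_i}$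 for $i\in J$, $\tilde\mu^\varepsilon_i=\mu_i$ otherwise. No observability: a strategy of player $i$ is $s_i:\operatorname{supp}\mu_i\to\Delta(A_i)$, $s(\theta)=(s_1(\theta_1),\dots,s_n(\theta_n))$; $s$ is a Bayesian–Nash equilibrium if for each $i$ and $\theta_i\in\operatorname{supp}\mu_i$, $s_i(\theta_i)\in\arg\max_{\sigma_i\in\Delta(A_i)}\sum_{\theta'_{-i}\in\operatorname{supp}\mu_{-i}}\mu_{-i}(\theta'_{-i})\theta_i(\sigma_i,s_{-i}(\theta'_{-i}))$; $B_0(\mu)$ is the set of these; $(\mu,s)$ with $s\in B_0(\mu)$ is a configuration, with aggregate outcome $x(\mu,s)=\big(\sum_{\theta_i}\mu_i(\theta_i)s_i(\theta_i)\big)_{i}$. Average fitness: $\Pi_{\theta_i}(\mu;s)=\pi_i(s_i(\theta_i),x(\mu,s)_{-i})$. Balanced: all types in each $\operatorname{supp}\mu_i$ have equal average fitness. Nearby set: for $\eta\ge0$, $B_0^\eta(\tilde\mu^\varepsilon;s)=\{\tilde s\in B_0(\tilde\mu^\varepsilon):\max_{i}\|\tilde s_i(\theta_i)-s_i(\theta_i)\|\le\eta\ \forall\theta\in\operatorname{supp}\mu\}$ (Euclidean norm). $(\mu,s)$ is stable if it is balanced and for every nonempty $J\subseteq N$, every $\tilde\theta_J$ and every $\eta>0$ there exist $\bar\eta\in[0,\eta)$ and $\bar\epsilon\in(0,1)$ such that for every $\varepsilon$ with $\|\varepsilon\|\in(0,\bar\epsilon)$, $B_0^{\bar\eta}(\tilde\mu^\varepsilon;s)\neq\emptyset$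 and every $\tilde s\in B_0^{\bar\eta}(\tilde\mu^\varepsilon;s)$ satisfies either (i) some $j\in J$ has $\Pi_{\theta_j}(\tilde\mu^\varepsilon;\tilde s)>\Pi_{\tilde\theta_j}(\tilde\mu^\varepsilon;\tilde s)$ for all $\theta_j\in\operatorname{supp}\mu_j$, or (ii) for every $i$ all types in $\operatorname{supp}\tilde\mu^\varepsilon_i$ have equal average fitness under $(\tilde\mu^\varepsilon,\tilde s)$. *)

(* Defs.v *)
From HB Require Import structures.
From mathcomp Require Import all_boot all_order all_algebra.
Set Implicit Arguments. Unset Strict Implicit. Unset Printing Implicit Defensive.
Import Order.TTheory GRing.Theory Num.Theory.
Local Open Scope ring_scope.

Section Game.
Variables (R : rcfType) (n : nat) (Act : finType) (A : 'I_n -> {set Act}).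

Definition prof := {a : {ffun 'I_n -> Act} | [forall i, a i \in A i]}.

Definition Theta := {ffun prof -> R}.

(* Mixed strategies of player i: elements of Delta(A_i), represented as
   functions Act -> R vanishing outside A i. *)
Definition mixed (i : 'I_n) (sg : Act -> R) : Prop :=
  (forall x, 0 <= sg x) /\ (forall x, x \notin A i -> sg x = 0) /\
  \sum_(x in A i) sg x = 1.

Definition ml (u : prof -> R) (sg : 'I_n -> Act -> R) : R :=
  \sum_(a : prof) (\prod_(i < n) sg i (val a i)) * u a.

Definition mdist (i : 'I_n) (sg tau : Act -> R) : R :=
  Num.sqrt (\sum_(x in A i) (sg x - tau x) ^+ 2).

Record fsd := Fsd { fsupp : seq Theta; fw : Theta -> R }.

Definition fsd_valid (d : fsd) : Prop :=
  uniq (fsupp d) /\ (forall t, (t \in fsupp d) <-> 0 < fw d t) /\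
  (forall t, 0 <= fw d t) /\ \sum_(t <- fsupp d) fw d t = 1.

(* a product distribution mu = mu_1 x ... x mu_n is given by its marginals *)
Definition dist := 'I_n -> fsd.

(* strategies s_i : supp mu_i -> Delta(A_i) (values off the support are
   irrelevant in every definition below) *)
Definition strat := 'I_n -> Theta -> Act -> R.

Definition upd (f : 'I_n -> Theta) (j : 'I_n) (t : Theta) : 'I_n -> Theta :=
  fun k => if k == j then t else f k.

(* the list of all type profiles in prod_{j in ps} supp mu_j
   (coordinates outside ps are given by the default df) *)
Fixpoint tprofs (mu : dist) (df : 'I_n -> Theta) (ps : seq 'I_n)
  : seq ('I_n -> Theta) :=
  match ps with
  | [::] => [:: df]
  | j :: ps' => [seq upd f j t | t <- fsupp (mu j), f <- tprofs mu df ps']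
  end.

Definition others (i : 'I_n) : seq 'I_n := [seq j <- enum 'I_n | j != i].

Definition EU (mu : dist) (s : strat) (i : 'I_n) (th : Theta)
  (sg : Act -> R) : R :=
  \sum_(tp <- tprofs mu (fun _ => th) (others i))
    (\prod_(j <- others i) fw (mu j) (tp j)) *
    ml th (fun k => if k == i then sg else s k (tp k)).

Definition bne (mu : dist) (s : strat) : Prop :=
  forall i th, th \in fsupp (mu i) ->
    mixed i (s i th) /\
    forall sg, mixed i sg -> EU mu s i th sg <= EU mu s i th (s i th).

Definition configuration (mu : dist) (s : strat) : Prop :=
  (forall i, fsd_valid (mu i)) /\ bne mu s.

Definition xagg (mu : dist) (s : strat) (i : 'I_n) : Act -> R :=
  fun x => \sum_(t <- fsupp (mu i)) fw (mu i) t * s i t x.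

Definition avgfit (pi : 'I_n -> prof -> R) (mu : dist) (s : strat)
  (i : 'I_n) (th : Theta) : R :=
  ml (pi i) (fun k => if k == i then s i th else xagg mu s k).

Definition balanced pi (mu : dist) (s : strat) : Prop :=
  forall i t t', t \in fsupp (mu i) -> t' \in fsupp (mu i) ->
    avgfit pi mu s i t = avgfit pi mu s i t'.

Definition entry (mu : dist) (J : {set 'I_n}) (tt : 'I_n -> Theta)
  (eps : 'I_n -> R) : dist :=
  fun i => if i \in J then
    Fsd (fsupp (mu i) ++ [:: tt i])
        (fun t => (1 - eps i) * fw (mu i) t + eps i * (t == tt i)%:R)
  else mu i.

Definition nearby (mu : dist) (mu' : dist) (s : strat) (eta : R)
  (s' : strat) : Prop :=
  bne mu' s' /\
  forall i t, t \in fsupp (mu i) -> mdist i (s' i t) (s i t) <= eta.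

Definition mutant (mu : dist) (J : {set 'I_n}) (tt : 'I_n -> Theta) : Prop :=
  J != set0 /\ forall j, j \in J -> tt j \notin fsupp (mu j).

(* eps in (0,1)^|J| with ||eps|| = max_{j in J} eps_j < ebar *)
Definition small_shares (J : {set 'I_n}) (eps : 'I_n -> R) (ebar : R) : Prop :=
  forall j, j \in J -> 0 < eps j < 1 /\ eps j < ebar.

Definition stable (pi : 'I_n -> prof -> R) (mu : dist) (s : strat) : Prop :=
  balanced pi mu s /\
  forall J tt, mutant mu J tt -> forall eta, 0 < eta ->
  exists etab ebar, (0 <= etab < eta) /\ (0 < ebar < 1) /\
    forall eps, small_shares J eps ebar ->
      let mu' := entry mu J tt eps in
      (exists s', nearby mu mu' s etab s') /\
      forall s', nearby mu mu' s etab s' ->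
        (exists2 j, j \in J & forall t, t \in fsupp (mu j) ->
            avgfit pi mu' s' j (tt j) < avgfit pi mu' s' j t)
        \/ balanced pi mu' s'.

End Game.

(* Main.v *)
Require Import Defs.
From HB Require Import structures.
From mathcomp Require Import all_boot all_order all_algebra.
From mathcomp Require Import ring.
Set Implicit Arguments. Unset Strict Implicit. Unset Printing Implicit Defensive.
Import Order.TTheory GRing.Theory Num.Theory.
Local Open Scope ring_scope.

Section S.
Variables (R : rcfType) (n : nat) (Act : finType) (A : 'I_n -> {set Act}).

Lemma sum_prof (G : {ffun 'I_n -> Act} -> R) :
  \sum_(a : prof A) G (val a) = \sum_(f in family (fun i => mem (A i))) G f.
Proof.
rewrite (big_sub (fun f : {ffun 'I_n -> Act} => [forall i, f i \in A i])) /=.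
by []. Qed.

Lemma ml_one (sg : 'I_n -> Act -> R) :
  ml (A:=A) (fun _ => 1) sg = \prod_(i < n) \sum_(x in A i) sg i x.
Proof.
rewrite bigA_distr_big_dep /ml -(sum_prof (fun f => \prod_i sg i (f i))).
by apply: eq_bigr => a _; rewrite mulr1.
Qed.

Lemma ml_ext (u : prof A -> R) (sg sg' : 'I_n -> Act -> R) :
  (forall k x, sg k x = sg' k x) -> ml u sg = ml u sg'.
Proof.
move=> E; apply: eq_bigr => a _; congr (_ * _); apply: eq_bigr => i _; exact: E.
Qed.

Lemma ml_extu (u u' : prof A -> R) (sg : 'I_n -> Act -> R) :
  (forall a, u a = u' a) -> ml u sg = ml u' sg.
Proof. by move=> E; apply: eq_bigr => a _; rewrite E. Qed.

Lemma ml_lin (u : prof A -> R) j (H : 'I_n -> Act -> R) (T : Type) (r : seq T)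
  (c : T -> R) (f : T -> Act -> R) :
  \sum_(t <- r) c t * ml u (fun k => if k == j then f t else H k) =
  ml u (fun k => if k == j then (fun x => \sum_(t <- r) c t * f t x) else H k).
Proof.
rewrite /ml; under eq_bigr do rewrite mulr_sumr.
rewrite exchange_big /=; apply: eq_bigr => a _.
have E g : \prod_(i < n) (if i == j then g else H i) (val a i)
   = g (val a j) * \prod_(i < n | i != j) H i (val a i).
  rewrite (bigD1 j) //= eqxx; congr (_ * _); apply: eq_bigr => i /negbTE ->; done.
rewrite E mulr_suml mulr_suml; apply: eq_bigr => t _; rewrite E; ring.
Qed.


Lemma tprofs_ml (mu : dist R A) (s : strat R A) (u : prof A -> R) df (ps : seq 'I_n) :
  uniq ps -> forall g,
  \sum_(tp <- tprofs mu df ps) (\prod_(j <- ps) fw (mu j) (tp j)) *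
     ml u (fun k => if k \in ps then s k (tp k) else g k)
  = ml u (fun k => if k \in ps then xagg mu s k else g k).
Proof.
elim: ps => [|j ps IH] /=.
  by move=> _ g; rewrite big_cons big_nil big_nil mul1r addr0.
move=> /andP[jps ups] g.
rewrite big_allpairs_dep /=.
pose H k := if k \in ps then xagg mu s k else g k.
transitivity (\sum_(t <- fsupp (mu j)) fw (mu j) t *
   ml u (fun k => if k == j then s j t else H k)).
  apply: eq_bigr => t _.
  pose gt k := if k == j then s j t else g k.
  rewrite (@ml_ext u _ (fun k => if k \in ps then xagg mu s k else gt k)); last first.
    move=> k x; rewrite /H /gt; case: eqP => [->|//]; by rewrite (negbTE jps).
  rewrite -(IH ups gt) mulr_sumr; apply: eq_bigr => f _.
  rewrite big_cons /upd eqxx mulrA; congr (_ * _ * _).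
    rewrite big_seq_cond [RHS]big_seq_cond; apply: eq_bigr => k /andP[kps _].
    by case: eqP kps => [->|//]; rewrite (negbTE jps).
  apply: ml_ext => k x; rewrite in_cons /gt; case: eqP => [->|_] //=.
  by rewrite (negbTE jps).
rewrite ml_lin; apply: ml_ext => k x; rewrite in_cons /H; case: eqP => //= ->.
by rewrite /xagg.
Qed.


Lemma EU_ml (mu : dist R A) (s : strat R A) i (th : Theta R A) sg :
  EU mu s i th sg = ml th (fun k => if k == i then sg else xagg mu s k).
Proof.
have memo k : (k \in others i) = (k != i) by rewrite mem_filter mem_enum andbT.
rewrite /EU.
under eq_bigr => tp _.
  rewrite (@ml_ext th _ (fun k => if k \in others i then s k (tp k) else (fun _ => sg) k)); last first.
    by move=> k x; rewrite memo; case: eqP.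
  over.
rewrite tprofs_ml; last by rewrite filter_uniq // enum_uniq.
by apply: ml_ext => k x; rewrite memo; case: eqP.
Qed.

Lemma ml_affine (p : prof A -> R) al be sg :
  ml (fun a => al * p a + be) sg = al * ml p sg + be * ml (A:=A) (fun _ => 1) sg.
Proof.
rewrite /ml mulr_sumr mulr_sumr -big_split; apply: eq_bigr => a _ /=; ring.
Qed.

Lemma ml_one_mixed i (sg sg' : Act -> R) (X : 'I_n -> Act -> R) :
  mixed A i sg -> mixed A i sg' ->
  ml (A:=A) (fun _ => 1) (fun k => if k == i then sg else X k) =
  ml (A:=A) (fun _ => 1) (fun k => if k == i then sg' else X k).
Proof.
move=> [_ [_ S1]] [_ [_ S2]]; rewrite !ml_one (bigD1 i) //= [RHS](bigD1 i) //= !eqxx S1 S2.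
congr (_ * _); apply: eq_bigr => k /negbTE -> //.
Qed.

Lemma best (pi : 'I_n -> prof A -> R) (nu : dist R A) (s : strat R A) i t t' :
  bne nu s -> t \in fsupp (nu i) -> t' \in fsupp (nu i) ->
  (exists al be : R, 0 < al /\ forall a, t a = al * pi i a + be) ->
  avgfit pi nu s i t' <= avgfit pi nu s i t.
Proof.
move=> Hb ti t'i [al [be [al0 Ht]]].
have [m1 BR] := Hb i t ti.
have [m2 _] := Hb i t' t'i.
have := BR _ m2; rewrite !EU_ml !(ml_extu _ Ht) !ml_affine.
rewrite (ml_one_mixed _ m2 m1) lerD2r ler_pM2l //.
Qed.


Lemma supp_entry (mu : dist R A) J tt eps i t :
  (t \in fsupp (entry mu J tt eps i)) = (t \in fsupp (mu i)) || ((i \in J) && (t == tt i)).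
Proof. by rewrite /entry; case: (i \in J) => /=; rewrite ?mem_cat ?mem_seq1 ?orbF. Qed.

End S.

Unset Implicit Arguments.
Set Strict Implicit.

Theorem mainTheorem11 (R : rcfType) (n : nat) (Act : finType)
  (A : 'I_n -> {set Act}) (pi : 'I_n -> prof A -> R)
  (mu : dist R A) (s : strat R A) :
  configuration mu s ->
  (forall i (t : Theta R A), t \in fsupp (mu i) ->
     exists alpha beta : R, 0 < alpha /\
       forall a : prof A, t a = alpha * pi i a + beta) ->
  (forall (J : {set 'I_n}) (tt : 'I_n -> Theta R A), mutant mu J tt ->
     forall eta : R, 0 < eta ->
     exists2 ebar : R, 0 < ebar &
       forall eps : 'I_n -> R, small_shares J eps ebar ->
         exists s' : strat R A, nearby mu (entry mu J tt eps) s eta s') ->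
  stable pi mu s.
Proof.
move=> [_ Hb] Haff Hnear; split.
  move=> i t t' ti t'i; apply/eqP; rewrite eq_le; apply/andP; split.
    exact: (best Hb t'i ti (Haff i t' t'i)).
  exact: (best Hb ti t'i (Haff i t ti)).
move=> J tt Hmut eta eta0.
have eta2 : 0 < eta / 2 by rewrite divr_gt0.
have [ebar0 e0 Hex] := Hnear J tt Hmut (eta / 2) eta2.
exists (eta / 2), (Num.min ebar0 (1/2)); split.
  by rewrite ltW //= ltr_pdivrMr // ltr_pMr // ltr1n.
split.
  by rewrite lt_min e0 /= divr_gt0 //= gt_min ltr_pdivrMr // mul1r ltr1n orbT.
move=> eps Hsm /=; split.
  apply: Hex => j jJ; have [H1 H2] := Hsm j jJ; split => //.
  apply: (lt_le_trans H2); by rewrite ge_min lexx.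
move=> s' [Hb' _].
set mu' := entry mu J tt eps.
have inc i t : t \in fsupp (mu i) -> t \in fsupp (mu' i).
  by move=> ti; rewrite /mu' supp_entry ti.
have Einc i t t' : t \in fsupp (mu i) -> t' \in fsupp (mu i) ->
    avgfit pi mu' s' i t = avgfit pi mu' s' i t'.
  move=> ti t'i; apply/eqP; rewrite eq_le; apply/andP; split.
    exact: (best Hb' (inc _ _ t'i) (inc _ _ ti) (Haff i t' t'i)).
  exact: (best Hb' (inc _ _ ti) (inc _ _ t'i) (Haff i t ti)).
case: (boolP (has (fun j => has (fun t => avgfit pi mu' s' j (tt j) < avgfit pi mu' s' j t)
                          (fsupp (mu j))) (enum J))).
  move=> /hasP [j]; rewrite mem_enum => jJ /hasP [t0 t0in lt0].
  left; exists j => // t tin; by rewrite (Einc j t t0).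
move=> /hasPn hn; right.
have E i t t' : t \in fsupp (mu' i) -> t' \in fsupp (mu i) ->
    avgfit pi mu' s' i t = avgfit pi mu' s' i t'.
  move=> ti t'i; move: (ti); rewrite /mu' supp_entry => /orP [ti0|/andP [iJ /eqP tE]].
    exact: Einc.
  rewrite tE in ti *.
  apply/eqP; rewrite eq_le; apply/andP; split.
    exact: (best Hb' (inc _ _ t'i) ti (Haff i t' t'i)).
  have := hn i; rewrite mem_enum => /(_ iJ) /hasPn /(_ t' t'i).
  by rewrite -leNgt.
move=> i t t' ti t'i; move: (t'i); rewrite /mu' supp_entry => /orP [t'0|/andP [iJ /eqP ->]].
  exact: E.
move: (ti); rewrite /mu' supp_entry => /orP [t0|/andP [_ /eqP ->]] //.
symmetry; apply: E t0; by rewrite /mu' supp_entry iJ eqxx orbT.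
Qed.
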